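(* Let $\ell$ be a prime and let $r$ be an integer with $1\leq r\leq \ell-1$ such that $p(\ell n+r)\equiv 0\pmod{\ell}$ for all $n\geq 0$. Then for all $n\geq 0$, $d_\ell(\ell n+r)\equiv 0 \pmod{\ell}$.
   Context: $p(n)$ denotes the number of unrestricted partitions of $n$. For each integer $k\geq 1$, the numbers $d_k(n)$ are defined by $\sum_{n\geq 0} d_k(n)q^n = \frac{f_2^k}{f_1^{3k+1}}$, where $f_r = \prod_{i\geq 1}(1-q^{ri})$. *)

(* Defs.v *)
From mathcomp Require Import all_boot all_order all_algebra.
Set Implicit Arguments. Unset Strict Implicit. Unset Printing Implicit Defensive.
Import Order.TTheory GRing.Theory Num.Theory.

(* A partition of n has at
   most n parts, each at most n; we represent it as a nonincreasing n-tuple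
   of entries in {0..n} (padded with zeros) whose sum is n. *)
Definition npart (n : nat) : nat :=
  #|[set t : n.-tuple 'I_n.+1 |
       sorted (fun a b : 'I_n.+1 => b <= a) t && (\sum_(x <- t) (x : nat) == n)]|.

Local Open Scope ring_scope.

(* d_k(n): coefficient of q^n in f_2^k / f_1^(3k+1), where
   f_r = prod_{i>=1} (1 - q^(r i)).  Modulo q^(n+1) only the factors with
   i <= n matter, and 1/(1-q^i) = sum_j q^(i j) may be truncated at j <= n;
   hence the coefficient is computed exactly by the following polynomial. *)
Definition dk (k n : nat) : int :=
  (\prod_(1 <= i < n.+1)
     ((1 - 'X^(2 * i)) ^+ k * (\sum_(j < n.+1) 'X^(i * j)) ^+ (3 * k + 1))
     : {poly int})`_n.

(* Main.v *)
Require Import Defs.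
From mathcomp Require Import all_boot all_order all_algebra.
From mathcomp Require Import zify.
Set Implicit Arguments. Unset Strict Implicit. Unset Printing Implicit Defensive.
Import Order.TTheory GRing.Theory Num.Theory.

Local Open Scope ring_scope.


Section Comb.
Local Open Scope nat_scope.

Lemma sum_ind_w N x : x <= N -> \sum_(i < N) i.+1 * (x == i.+1) = x.
Proof.
case: x => [|x] hx; first by rewrite big1 // => i _; rewrite muln0.
have hxN : x < N by [].
rewrite (bigD1 (Ordinal hxN)) //= eqxx muln1 big1 ?addn0 // => i hi.
have : (x.+1 == i.+1) = false.
  by rewrite eqSS; apply/negbTE; rewrite eq_sym; exact: hi.
by move=> ->; rewrite muln0.
Qed.

Lemma sum_ind_c N x : x <= N -> \sum_(i < N) (x == i.+1 : nat) = (x != 0).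
Proof.
case: x => [|x] hx; first by rewrite big1.
have hxN : x < N by [].
rewrite (bigD1 (Ordinal hxN)) //= eqxx big1 ?addn0 // => i hi.
have : (x.+1 == i.+1) = false.
  by rewrite eqSS; apply/negbTE; rewrite eq_sym; exact: hi.
by move=> ->.
Qed.

Lemma sum_cnt_w N (s : seq nat) : all (fun x => x <= N) s ->
  \sum_(i < N) i.+1 * count (pred1 i.+1) s = sumn s.
Proof.
elim: s => [|x s IH] /=; first by rewrite big1 // => i _; rewrite muln0.
case/andP=> hx hs; rewrite -(IH hs) -[X in X + _](sum_ind_w hx) -big_split /=.
by apply: eq_bigr => i _; rewrite mulnDr.
Qed.

Lemma sum_cnt_c N (s : seq nat) : all (fun x => x <= N) s ->
  \sum_(i < N) count (pred1 i.+1) s = count (fun x => x != 0) s.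
Proof.
elim: s => [|x s IH] /=; first by rewrite big1.
case/andP=> hx hs; rewrite -(IH hs) -[X in X + _](sum_ind_c hx) -big_split /=.
by apply: eq_bigr.
Qed.

End Comb.

Section Part.
Local Open Scope nat_scope.
Variables N j : nat.
Hypothesis hj : j <= N.

Definition wt (f : {ffun 'I_N -> 'I_N.+1}) := \sum_(i < N) i.+1 * f i.
Definition phi (t : j.-tuple 'I_j.+1) : {ffun 'I_N -> 'I_N.+1} :=
  [ffun i : 'I_N => inord (count (fun x : 'I_j.+1 => (x : nat) == i.+1) t)].
Definition PA := [set t : j.-tuple 'I_j.+1 |
       sorted (fun a b : 'I_j.+1 => b <= a) t && (\sum_(x <- t) (x : nat) == j)].
Definition PB := [set f : {ffun 'I_N -> 'I_N.+1} | j == wt f].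

Lemma tup_all (t : j.-tuple 'I_j.+1) : all (fun x => x <= N) (map (@nat_of_ord _) t).
Proof.
by apply/allP => x /mapP [y _ ->]; apply: leq_trans hj; rewrite -ltnS.
Qed.

Lemma phiE t (i : 'I_N) : (phi t i : nat) = count (pred1 i.+1) (map (@nat_of_ord _) t).
Proof.
rewrite ffunE inordK; first by rewrite count_map.
rewrite ltnS; apply: leq_trans (count_size _ _) _; by rewrite size_tuple.
Qed.

Lemma sum_tup (t : seq 'I_j.+1) : \sum_(x <- t) (x : nat) = sumn (map (@nat_of_ord _) t).
Proof. by rewrite sumnE big_map. Qed.

Lemma phiB t : t \in PA -> phi t \in PB.
Proof.
rewrite !inE => /andP[_ /eqP hs]; rewrite /wt.
under eq_bigr do rewrite phiE.
by rewrite sum_cnt_w ?tup_all // -sum_tup hs.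
Qed.

Lemma phi_inj : {in PA &, injective phi}.
Proof.
move=> t1 t2 h1 h2 e.
have hc : forall i : 'I_N, count (pred1 i.+1) (map (@nat_of_ord _) t1)
                        = count (pred1 i.+1) (map (@nat_of_ord _) t2).
  by move=> i; rewrite -!phiE e.
have hz : count (fun x => x != 0) (map (@nat_of_ord _) t1)
        = count (fun x => x != 0) (map (@nat_of_ord _) t2).
  by rewrite -!(sum_cnt_c (tup_all _)); apply: eq_bigr => i _; exact: hc.
have hp : perm_eq (map (@nat_of_ord _) t1) (map (@nat_of_ord _) t2).
  apply/allP => x _; apply/eqP; case: x => [|x].
    have := count_predC (pred1 0) (map (@nat_of_ord _) t1).
    have := count_predC (pred1 0) (map (@nat_of_ord _) t2).
    rewrite !size_map !size_tuple.
    have e1 : forall s : seq nat, count (predC (pred1 0)) s = count (fun x => x != 0) s.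
      by move=> s; apply: eq_count.
    rewrite !e1 hz; lia.
  case: (ltnP x N) => hx; first exact: (hc (Ordinal hx)).
  have z : forall t : j.-tuple 'I_j.+1, count_mem x.+1 (map (@nat_of_ord _) t) = 0.
    move=> t; apply/count_memPn; apply/negP => /(allP (tup_all t)) /= h.
    lia.
  by rewrite !z.
have hs : map (@nat_of_ord _) t1 = map (@nat_of_ord _) t2.
  apply: (@sorted_eq _ (fun a b : nat => b <= a)) => //.
  - by move=> a b c hab hbc; apply: leq_trans hbc hab.
  - by move=> a b /andP[hab hba]; apply/eqP; rewrite eqn_leq hab hba.
  - by rewrite sorted_map; move: h1; rewrite inE => /andP[].
  - by rewrite sorted_map; move: h2; rewrite inE => /andP[].
by apply: val_inj; apply: (inj_map (@ord_inj _)).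
Qed.

Lemma phi_surj f : f \in PB -> exists2 t, t \in PA & f = phi t.
Proof.
rewrite inE => /eqP hw.
set s0 := flatten [seq nseq (f i) i.+1 | i <- index_enum 'I_N].
have cnt0 : forall a : pred nat, count a s0 = \sum_(i < N) a i.+1 * f i.
  move=> a; rewrite count_flatten -map_comp sumnE big_map.
  by apply: eq_bigr => i _ /=; rewrite count_nseq.
have sum0 : sumn s0 = j.
  rewrite sumn_flatten -map_comp sumnE big_map hw /wt.
  by apply: eq_bigr => i _ /=; rewrite sumn_nseq.
have hb : forall i : 'I_N, i.+1 * f i <= j.
  by move=> i; rewrite hw /wt (bigD1 i) //= leq_addr.
have size0 : size s0 <= j.
  rewrite -count_predT cnt0 hw /wt; apply: leq_sum => i _ /=.
  by rewrite mul1n leq_pmull.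
have all0 : all (fun x => x <= j) s0.
  have c0 : count (fun x => j < x) s0 = 0.
    rewrite cnt0; apply: big1 => i _ /=.
    case: (ltnP j i.+1) => h //=.
    move: (hb i); case: (nat_of_ord (f i)) => [|k]; first by rewrite muln0.
    rewrite mulnS; lia.
  apply/allP => x hx; rewrite leqNgt; apply/negP => hjx.
  have : 0 < count (fun x => j < x) s0 by rewrite -has_count; apply/hasP; exists x.
  by rewrite c0.
set u := s0 ++ nseq (j - size s0) 0.
have sizeu : size u = j by rewrite size_cat size_nseq; lia.
have allu : all (fun x => x <= j) u.
  by rewrite all_cat all0 /=; apply/allP => x; rewrite mem_nseq => /andP[_ /eqP ->].
set ts := sort (fun a b : 'I_j.+1 => b <= a) (map (inord : nat -> 'I_j.+1) u).
have sizets : size ts == j by rewrite size_sort size_map sizeu.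
have hpt : perm_eq ts (map (inord : nat -> 'I_j.+1) u) by rewrite perm_sort.
exists (Tuple sizets).
  rewrite inE /=; apply/andP; split.
    by apply: sort_sorted => a b; rewrite orbC leq_total.
  rewrite (perm_big _ hpt) big_map.
  rewrite (eq_big_seq id); last first.
    by move=> x /(allP allu) hx; rewrite /= inordK.
  by rewrite -sumnE sumn_cat sum0 sumn_nseq mul0n addn0.
apply/ffunP => i; apply: val_inj; rewrite /= phiE /=.
rewrite count_map (permP hpt) count_map.
rewrite (@eq_in_count _ _ (pred1 i.+1)); last first.
  by move=> x /(allP allu) hx; rewrite /= inordK.
rewrite count_cat cnt0 count_nseq /= mul0n addn0.
rewrite (bigD1 i) //= eqxx mul1n big1 ?addn0 // => k hk.
have -> : (k.+1 == i.+1) = false by rewrite eqSS; apply/negbTE; exact: hk.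
by [].
Qed.

Lemma card_part : #|PB| = npart j.
Proof.
have -> : PB = phi @: PA.
  apply/setP => f; apply/idP/imsetP; first exact: phi_surj.
  by move=> [t ht ->]; apply: phiB.
by rewrite card_in_imset //; apply: phi_inj.
Qed.

End Part.

Lemma pgen N j : (j <= N)%N ->
  (\prod_(1 <= i < N.+1) (\sum_(k < N.+1) 'X^(i * k)) : {poly int})`_j
  = (npart j)%:R.
Proof.
move=> hj.
rewrite big_add1 /= big_mkord bigA_distr_bigA coef_sum.
under eq_bigr do rewrite prodrXr coefXn.
rewrite -(card_part hj) -natr_sum -sum1_card.
congr (_ %:R); rewrite [RHS]big_mkcond; apply: eq_bigr => f _.
by rewrite inE /wt; case: (_ == _).
Qed.

Lemma frob_sparse (l : nat) (hp : prime l) (q : {poly 'F_l}) k :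
  ~~ (l %| k)%N -> (q ^+ l)`_k = 0.
Proof.
have hc : l \in [pchar {poly 'F_l}] by rewrite pchar_poly; apply: pchar_Fp.
elim/poly_ind: q k => [|q c IH] k hk.
  by rewrite expr0n; case: l hp {hc hk} => // l' _; rewrite coef0.
rewrite -(pFrobenius_autE hc) pFrobenius_autD_comm; last exact: mulrC.
rewrite !pFrobenius_autE exprMn coefD coefMXn -polyC_exp coefC.
have -> : (k == 0%N) = false.
  by apply/negbTE; apply: contra hk => /eqP ->; rewrite dvdn0.
rewrite addr0; case: ifP => // hkl; apply: IH.
by move: hk; apply: contra; rewrite dvdn_subl // leqNgt hkl.
Qed.

Theorem theorem3p2 (l r : nat) :
  prime l -> (1 <= r <= l - 1)%N ->
  (forall n : nat, (l %| npart (l * n + r))%N) ->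
  forall n : nat, (l%:Z %| dk l (l * n + r))%Z.
Proof.
move=> hp /andP[hr1 hr2] hyp n.
have hl : (0 < l)%N := prime_gt0 hp.
rewrite (dvdz_pcharf (pchar_Fp hp)) /dk.
set N := (l * n + r)%N.
set S := fun i : nat => (\sum_(k < N.+1) 'X^(i * k) : {poly int}).
have E : \prod_(1 <= i < N.+1) ((1 - 'X^(2 * i)) ^+ l * S i ^+ (3 * l + 1))
  = (\prod_(1 <= i < N.+1) ((1 - 'X^(2 * i)) * S i ^+ 3)) ^+ l
    * \prod_(1 <= i < N.+1) S i.
  rewrite -prodrXl -big_split; apply: eq_bigr => i _.
  by rewrite exprMn -exprM mulnC addn1 exprSr mulrA.
rewrite E -coef_map rmorphM rmorphXn coefM.
apply/eqP; apply: big1 => -[k hk] _ /=.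
case hlk: (l %| k)%N; last by rewrite frob_sparse ?hlk // mul0r.
move/dvdnP: hlk => [m hkm]; rewrite hkm in hk *.
have hm : (m <= n)%N.
  rewrite leqNgt; apply/negP => hnm.
  have : (l * n.+1 <= m * l)%N by rewrite mulnC leq_mul2r hnm orbT.
  rewrite mulnS; move: hk; rewrite /N ltnS => hk h2; lia.
rewrite coef_map pgen ?leq_subr // [X in _ * X]/= mulrz_nat.
have -> : (N - m * l = l * (n - m) + r)%N.
  have h : (l * m <= l * n)%N by rewrite leq_mul2l hm orbT.
  by rewrite /N mulnBr [(m * l)%N]mulnC; lia.
have -> : (npart (l * (n - m) + r))%:R = 0 :> 'F_l.
  by apply/eqP; rewrite -(dvdn_pcharf (pchar_Fp hp)).
by rewrite mulr0.
Qed.
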